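(* Let $\prec$ be a coherent contextual order on $\widetilde{\Sigma}=\widetilde{\Sigma}_1\uplus\widetilde{\Sigma}_2$ (with $\widetilde{\Sigma}_1,\widetilde{\Sigma}_2$ disjoint visibly pushdown alphabets) and let $P_1,P_2$ be well-matched visibly pushdown languages over $\widetilde{\Sigma}_1,\widetilde{\Sigma}_2$ respectively. Then $\mathrm{red}_\prec(P_1\parallel P_2)\subseteq\mathsf{wn}(P_1\parallel P_2)$.
   Context: A visibly pushdown (VP) alphabet is a finite alphabet partitioned into calls $\Sigma^{\mathsf{call}}$, returns $\Sigma^{\mathsf{ret}}$ and internals $\Sigma^{\mathsf{int}}$; write $\Sigma^{\mathsf{call}}_i,\Sigma^{\mathsf{ret}}_i$ for those of $\widetilde{\Sigma}_i$. Calls and returns in a word are matched like opening and closing parentheses (internals ignored); unmatched calls/returns are pending; a word is well-matched if none are pending. A visibly pushdown language is one accepted by a visibly pushdown automaton (pushes one symbol on each call, pops on each return, stack unchanged on internals). Shuffle: $P_1\parallel P_2=\{w\in\widetilde{\Sigma}^*:\Pi_{\widetilde{\Sigma}_i}(w)\in P_i\}$ with $\Pi_{\widetilde{\Sigma}_i}$ erasing letters outside $\widetilde{\Sigma}_i$. A word is well-nested if every matched call–return pair consists of letters from the same $\widetilde{\Sigma}_k$; $\mathsf{wn}(L)$ is the set of well-nested words of $L$. $\mathbb{I}=\{(a,b):a\in\widetilde{\Sigma}_i,b\in\widetilde{\Sigma}_j,i\ne j\}$, $\equiv_{\mathbb{I}}$ the least reflexive transitive relation with $uabv\equiv_{\mathbb{I}}ubav$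 for $(a,b)\in\mathbb{I}$. A contextual order is a map $\prec$ from $\widetilde{\Sigma}^*$ to strict total orders on $\widetilde{\Sigma}$; it induces $\preceq$: $\sigma\preceq\rho$ iff $\sigma$ is a prefix of $\rho$ or $\sigma=\alpha a\beta$, $\rho=\alpha b\gamma$ with $a\prec_\alpha b$. $\mathrm{red}_\prec(L)=\{w\in L:\forall u\in L,(u\equiv_{\mathbb{I}}w\wedge u\preceq w)\Rightarrow u=w\}$. A contextual order $\prec$ is coherent if for every $u\in\widetilde{\Sigma}^*$ and $i\in\{1,2\}$: if $u$ has pending calls and the last pending call of $u$ is in $\Sigma^{\mathsf{call}}_i$, then $a\prec_u r$ for every $a\in\widetilde{\Sigma}_i$ and every $r\in\bigcup_{j\ne i}\Sigma^{\mathsf{ret}}_j$. *)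

(* Defs.v *)
From mathcomp Require Import all_boot.
Set Implicit Arguments. Unset Strict Implicit. Unset Printing Implicit Defensive.

Inductive letter_kind := Call | Ret | Int.

Definition is_call (k : letter_kind) : bool := if k is Call then true else false.
Definition is_ret (k : letter_kind) : bool := if k is Ret then true else false.

Section Words.
Variables (S : finType) (kind : S -> letter_kind).

Fixpoint wm_from (d : nat) (w : seq S) : bool :=
  match w with
  | [::] => d == 0
  | a :: w' =>
    match kind a with
    | Call => wm_from d.+1 w'
    | Ret => (0 < d) && wm_from d.-1 w'
    | Int => wm_from d w'
    end
  end.

Definition well_matched (w : seq S) : bool := wm_from 0 w.

(** In u = p ++ c :: s, the call c is pending: no return of s matches it
    (a return b of s = v ++ b :: x matches c iff v is well-matched). *)
Definition pending_call_at (p : seq S) (c : S) (s : seq S) : Prop :=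
  is_call (kind c) /\
  ~ (exists v b x, s = v ++ b :: x /\ is_ret (kind b) /\ well_matched v).

Definition last_pending_call (u : seq S) (c : S) : Prop :=
  exists p s, u = p ++ c :: s /\ pending_call_at p c s /\
    (forall p' c' s', s = p' ++ c' :: s' -> ~ pending_call_at (p ++ c :: p') c' s').

(** Visibly pushdown automata (with pops on the empty stack allowed,
    None = bottom of stack) and visibly pushdown languages. *)
Record vpa := VPA {
  vQ : finType;
  vG : finType;
  vinit : pred vQ;
  vfinal : pred vQ;
  vcall : vQ -> S -> vQ -> vG -> bool;
  vret : vQ -> S -> option vG -> vQ -> bool;
  vint : vQ -> S -> vQ -> bool
}.

Fixpoint vpa_acc (A : vpa) (q : vQ A) (st : seq (vG A)) (w : seq S) : Prop :=
  match w with
  | [::] => vfinal q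
  | a :: w' =>
    match kind a with
    | Call => exists q' g, vcall q a q' g /\ vpa_acc q' (g :: st) w'
    | Ret =>
      match st with
      | [::] => exists q', vret q a None q' /\ vpa_acc q' [::] w'
      | g :: st' => exists q', vret q a (Some g) q' /\ vpa_acc q' st' w'
      end
    | Int => exists q', vint q a q' /\ vpa_acc q' st w'
    end
  end.

Definition vpa_accepts (A : vpa) (w : seq S) : Prop :=
  exists q0 : vQ A, vinit q0 /\ vpa_acc q0 [::] w.

Definition is_VPL (L : seq S -> Prop) : Prop :=
  exists A : vpa, forall w, L w <-> vpa_accepts A w.

End Words.

Section Shuffle.
Variables (S1 S2 : finType) (k1 : S1 -> letter_kind) (k2 : S2 -> letter_kind).

Definition Sig := (S1 + S2)%type.

Definition skind (a : Sig) : letter_kind :=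
  match a with inl x => k1 x | inr y => k2 y end.

Definition side (a : Sig) : bool := if a is inl _ then true else false.

Definition proj1w (w : seq Sig) : seq S1 :=
  pmap (fun a => if a is inl x then Some x else None) w.
Definition proj2w (w : seq Sig) : seq S2 :=
  pmap (fun a => if a is inr y then Some y else None) w.

Definition shuffle (P1 : seq S1 -> Prop) (P2 : seq S2 -> Prop) : seq Sig -> Prop :=
  fun w => P1 (proj1w w) /\ P2 (proj2w w).

Definition well_nested (w : seq Sig) : Prop :=
  forall u a v b x, w = u ++ a :: v ++ b :: x ->
    is_call (skind a) -> is_ret (skind b) -> well_matched skind v ->
    side a = side b.

Definition wn (L : seq Sig -> Prop) : seq Sig -> Prop :=
  fun w => L w /\ well_nested w.

Definition indep_step (u v : seq Sig) : Prop :=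
  exists x a b y, u = x ++ a :: b :: y /\ v = x ++ b :: a :: y /\ side a != side b.

Inductive equivI : seq Sig -> seq Sig -> Prop :=
  | equivI_refl u : equivI u u
  | equivI_step u v : indep_step u v -> equivI u v
  | equivI_trans u v w : equivI u v -> equivI v w -> equivI u w.

Definition contextual_order (ord : seq Sig -> rel Sig) : Prop :=
  forall u,
    (forall a, ~~ ord u a a) /\
    (forall a b c, ord u a b -> ord u b c -> ord u a c) /\
    (forall a b, a != b -> ord u a b || ord u b a).

Definition ctx_le (ord : seq Sig -> rel Sig) (s r : seq Sig) : Prop :=
  prefix s r \/
  exists al a be b ga, s = al ++ a :: be /\ r = al ++ b :: ga /\ ord al a b.

Definition red (ord : seq Sig -> rel Sig) (L : seq Sig -> Prop) : seq Sig -> Prop :=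
  fun w => L w /\ forall u, L u -> equivI u w -> ctx_le ord u w -> u = w.

Definition coherent (ord : seq Sig -> rel Sig) : Prop :=
  forall u c, last_pending_call skind u c ->
    forall a r, side a = side c -> is_ret (skind r) -> side r != side c ->
      ord u a r.

End Shuffle.

(* Main.v *)
Require Import Defs.
From mathcomp Require Import all_boot.
From mathcomp Require Import zify.

Section G.
Variables (S : finType) (kind : S -> letter_kind).
Local Notation wmf := (wm_from kind).

Lemma wm_cat n d v y : wmf n v -> wmf d y -> wmf (n + d) (v ++ y).
Proof.
elim: v n => [|c v IH] n /=; first by move/eqP->.
case: (kind c) => [H Hy|/andP [Hn H] Hy|H Hy].
- by rewrite -addSn; apply: IH.
- case: n Hn H => // n _ H /=; rewrite ?addSn /=; exact: IH.
- exact: IH.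
Qed.

Lemma wm_cat_inv n d v y : wmf n v -> wmf (n + d) (v ++ y) -> wmf d y.
Proof.
elim: v n => [|c v IH] n /=; first by move/eqP->.
case: (kind c) => [H Hy|/andP [Hn H] /andP [_ Hy]|H Hy].
- by apply: (IH n.+1).
- case: n Hn H Hy => // n _ H /=; rewrite ?addSn /=; exact: IH.
- exact: (IH n).
Qed.

Lemma wm_pre n v y : wmf n (v ++ y) -> exists d, wmf d y.
Proof.
elim: v n => [|c v IH] n /=; first by exists n.
by case: (kind c) => [/IH|/andP[_ /IH]|/IH].
Qed.

Lemma wm_det m n v : wmf m v -> wmf n v -> m = n.
Proof.
elim: v m n => [|c v IH] m n /=; first by move/eqP-> => /eqP->.
case: (kind c).
- by move=> H1 H2; have [] := IH _ _ H1 H2.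
- move=> /andP[hm H1] /andP[hn H2]; have E := IH _ _ H1 H2.
  by rewrite -(prednK hm) -(prednK hn) E.
- exact: IH.
Qed.

Lemma split_ret n s d : size s <= n -> wmf d.+1 s ->
  exists v b x, s = v ++ b :: x /\ wmf 0 v /\ kind b = Ret /\ wmf d x.
Proof.
elim: n s d => [|n IH] [|c s] d //= Hs.
case E: (kind c) => H.
- have [v1 [b1 [x1 [E1 [H1 [Hb1 H2]]]]]] := IH s d.+1 Hs H.
  have Hx1 : size x1 <= n.
    by move: Hs; rewrite E1 size_cat /=; lia.
  have [v2 [b2 [x2 [E2 [H3 [Hb2 H4]]]]]] := IH x1 d Hx1 H2.
  exists (c :: v1 ++ b1 :: v2), b2, x2.
  split; first by rewrite E1 E2 /= -catA.
  split; last by [].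
  rewrite /= E; apply: (wm_cat 0 1) => //=.
  by rewrite Hb1.
  by exists [::], c, s.
- have [v [b [x [E1 [H1 [Hb H2]]]]]] := IH s d Hs H.
  exists (c :: v), b, x; rewrite E1 /=; split => //.
  by rewrite E.
Qed.

End G.

Section C.
Variables (S1 S2 : finType) (k1 : S1 -> letter_kind) (k2 : S2 -> letter_kind).
Local Notation sk := (skind k1 k2).

Lemma filt1 d w : wm_from sk d (filter (fun c => side c == true) w) = wm_from k1 d (proj1w w).
Proof.
rewrite /proj1w; elim: w d => [|c w IH] d //=.
case: c => [x|y] /=; last exact: IH.
by case: (k1 x) => //; rewrite IH.
Qed.

Lemma filt2 d w : wm_from sk d (filter (fun c => side c == false) w) = wm_from k2 d (proj2w w).
Proof.
rewrite /proj2w; elim: w d => [|c w IH] d //=.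
case: c => [x|y] /=; first exact: IH.
by case: (k2 y) => //; rewrite IH.
Qed.

Lemma wn_infix y v z : well_nested k1 k2 (y ++ v ++ z) -> well_nested k1 k2 v.
Proof.
move=> H u a v' b x E ca rb wv.
apply: (H (y ++ u) a v' b (x ++ z)) => //.
by rewrite E -!catA /= -!catA.
Qed.

Lemma wn_filt s n v : size v <= n -> well_nested k1 k2 v -> wm_from sk 0 v ->
  wm_from sk 0 (filter (fun c => side c == s) v).
Proof.
elim: n v => [|n IH] [|c v] //= Hs Hn.
case E: (sk c) => H.
- have [v1 [b [x [E1 [H1 [Hb H2]]]]]] := @split_ret _ _ _ _ _ (leqnn _) H.
  have Nv : well_nested k1 k2 (c :: v1 ++ b :: x) by rewrite -E1.
  have Scb : side c = side b.
    apply: (Nv [::] c v1 b x) => //; first by rewrite E.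
    by rewrite Hb.
  have N1 : well_nested k1 k2 v1.
    by apply: (wn_infix ([:: c]) _ (b :: x)).
  have N2 : well_nested k1 k2 x.
    by apply: (wn_infix (c :: v1 ++ [:: b]) _ ([::])); rewrite cats0 /= -catA.
  have S1' : size v1 <= n.
    move: Hs; rewrite E1 size_cat /= ltnS => h; exact: leq_trans (leq_addr _ _) h.
  have S2' : size x <= n.
    move: Hs; rewrite E1 size_cat /= ltnS addnS => h; exact: leq_trans (leq_addl _ _) (ltnW h).
  have F1 := IH _ S1' N1 H1.
  have F2 := IH _ S2' N2 H2.
  rewrite E1 filter_cat /= -Scb.
  case: (side c == s) => /=.
  + rewrite E; apply: (@wm_cat _ _ 0 1) => //=.
    by rewrite Hb.
  + exact: (@wm_cat _ _ 0 0).
- by [].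
- have N : well_nested k1 k2 v by apply: (wn_infix ([:: c]) _ ([::])); rewrite cats0.
  have F := IH _ Hs N H.
  by case: (side c == s) => //=; rewrite E.
Qed.

Lemma move_eq (p : seq (Sig S1 S2)) (a : Sig S1 S2) y z : all (fun c => side c != side a) y ->
  equivI (p ++ a :: y ++ z) (p ++ y ++ a :: z).
Proof.
elim: y p => [|c y IH] p /=; first by constructor.
case/andP => Hc Hy.
apply: (@equivI_trans _ _ _ (p ++ c :: a :: y ++ z)).
  apply: equivI_step; exists p, a, c, (y ++ z); split => //; split => //.
  by rewrite eq_sym.
by have := IH (rcons p c) Hy; rewrite -cats1 -!catA.
Qed.

Lemma equivI_proj (u v : seq (Sig S1 S2)) : equivI u v -> proj1w u = proj1w v /\ proj2w u = proj2w v.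
Proof.
elim => //.
- move=> u0 v0 [x [a [b [y [-> [-> H]]]]]].
  rewrite /proj1w /proj2w !pmap_cat /=.
  by case: a b H => [a|a] [b|b].
- by move=> u0 v0 w0 _ [-> ->] _ [-> ->].
Qed.

Lemma find_split (P : pred (Sig S1 S2)) x : has P x ->
  exists y a z, x = y ++ a :: z /\ P a /\ all (predC P) y.
Proof.
elim: x => [|c x IH] //=.
case E: (P c) => /= H.
- by exists [::], c, x.
- have [y [a [z [-> [Pa Ay]]]]] := IH H.
  exists (c :: y), a, z; split => //; split => //=.
  by rewrite E.
Qed.

End C.

Theorem proposition3p17 (S1 S2 : finType)
  (k1 : S1 -> letter_kind) (k2 : S2 -> letter_kind)
  (ord : seq (Sig S1 S2) -> rel (Sig S1 S2))
  (P1 : seq S1 -> Prop) (P2 : seq S2 -> Prop) :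
  contextual_order ord ->
  coherent k1 k2 ord ->
  is_VPL k1 P1 -> (forall w, P1 w -> well_matched k1 w) ->
  is_VPL k2 P2 -> (forall w, P2 w -> well_matched k2 w) ->
  forall w, red ord (shuffle P1 P2) w -> wn k1 k2 (shuffle P1 P2) w.
Proof.
move=> Hord Hcoh _ HP1 _ HP2 w [Lw Hred]; split => //.
have Wwf : forall s, wm_from (skind k1 k2) 0 (filter (fun c => side c == s) w).
  case.
  - by rewrite filt1; apply: HP1; exact: Lw.1.
  - by rewrite filt2; apply: HP2; exact: Lw.2.
have main : forall u a v b x, w = u ++ a :: v ++ b :: x ->
    is_call (skind k1 k2 a) -> is_ret (skind k1 k2 b) ->
    well_matched (skind k1 k2) v -> well_nested k1 k2 v -> side a = side b.
  move=> u a v b x Ew Ca Rb Wv Nv.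
  case: (boolP (side a == side b)) => [/eqP //|Hab]; exfalso.
  have Ca' : skind k1 k2 a = Call by move: Ca; case: (skind k1 k2 a).
  have Rb' : skind k1 k2 b = Ret by move: Rb; case: (skind k1 k2 b).
  have Wvf := @wn_filt _ _ k1 k2 (side a) _ _ (leqnn _) Nv Wv.
  have Hba : (side b == side a) = false by rewrite eq_sym; apply/negbTE.
  have Hx : has (fun c => side c == side a) x.
    apply/negPn/negP => Hn.
    have := Wwf (side a).
    rewrite Ew filter_cat /= eqxx filter_cat /= Hba.
    have -> : filter (fun c => side c == side a) x = [::].
      by apply/eqP; move: Hn; rewrite has_filter negbK.
    move/(@wm_pre _ _ _ _ _) => [d] /=; rewrite Ca' cats0 => H.
    by have := @wm_det _ _ _ _ _ H Wvf.
  have [y [a' [z [Ex [Pa' Ay]]]]] := @find_split _ _ _ _ Hx.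
  set p := u ++ a :: v.
  have Hlpc : last_pending_call (skind k1 k2) p a.
    exists u, v; split => //; split.
      split => //.
      move=> [v1 [b' [x' [Ev [Rb1 Wv1]]]]].
      rewrite Ev in Wv.
      have := @wm_cat_inv _ _ 0 0 _ _ Wv1 Wv.
      by move: Rb1 => /=; case: (skind k1 k2 b').
    move=> p' c' s' Es [Cc' Hn]; apply: Hn.
    rewrite /well_matched Es in Wv.
    have [d Hd] := @wm_pre _ _ _ _ _ Wv.
    move: Hd => /=.
    have -> : skind k1 k2 c' = Call by move: Cc'; case: (skind k1 k2 c').
    move=> Hd.
    have [v1 [b1 [x1 [E1 [W1 [R1 _]]]]]] := @split_ret _ _ _ _ _ (leqnn _) Hd.
    exists v1, b1, x1; split => //; split => //.
    by rewrite R1.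
  have Pa2 : side a' = side a by apply/eqP.
  have Hord' : ord p a' b.
    apply: (Hcoh p a Hlpc) => //.
    by rewrite Hba.
  set u' := p ++ a' :: b :: y ++ z.
  have Ew' : w = p ++ (b :: y) ++ a' :: z by rewrite Ew Ex /p -catA.
  have Eq : equivI u' w.
    rewrite Ew' /u'; apply: (@move_eq _ _ p a' (b :: y) z).
    by rewrite /= Pa2 Hba.
  have Lu' : shuffle P1 P2 u'.
    have [E1 E2] := @equivI_proj _ _ _ _ Eq.
    by rewrite /shuffle E1 E2.
  have Cle : ctx_le ord u' w.
    right; exists p, a', (b :: y ++ z), b, (y ++ a' :: z); split => //.
  have := Hred u' Lu' Eq Cle.
  rewrite Ew' /u' => /eqP; rewrite eqseq_cat // eqxx /= eqseq_cons => /andP[/eqP Eab _].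
  by move: Pa2; rewrite Eab => /eqP; rewrite Hba.
move=> u a v b x.
have : size v <= size v by [].
elim: (size v) {-2}v u a b x => [|n IH] v' u a b x Hs Ew Ca Rb Wv.
  apply: (main u a v' b x) => //.
  by case: v' Hs {Ew Wv} => // _ u1 a1 v1 b1 x1; case: u1.
apply: (main u a v' b x) => //.
move=> u1 a1 v1 b1 x1 E1 Ca1 Rb1 Wv1.
apply: (IH v1 (u ++ a :: u1) a1 b1 (x1 ++ b :: x)) => //.
- by move: Hs; rewrite E1 size_cat /= size_cat /=; lia.
- by rewrite Ew E1 -!catA /= -!catA /=.
Qed.
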